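(* Let $\mathbb{N}$ be a strongly connected directed graph on $\{1,\dots,m\}$ and let $n\ge 1$. For $i\in\{1,\dots,m\}$ let $\mathcal{N}_i=\{j^i_1,\dots,j^i_{m_i}\}$ be the set of neighbors of $i$ (including $i$), let $b_i$ be the $i$th unit vector of $\mathbb{R}^m$, $\tilde B_i = b_i\otimes I_n$, and $\tilde C_i=\mathrm{column}\{C_{ij^i_1},\dots,C_{ij^i_{m_i}}\}$ with $C_{ij}=(b_i'-b_j')\otimes I_n$. Then there exist matrices $\hat H_i\in\mathbb{R}^{n\times nm_i}$, $i\in\{1,\dots,m\}$, such that for every $q\in\{1,\dots,m\}$ the pair $\big(\sum_{i=1}^m\tilde B_i\hat H_i\tilde C_i,\ \tilde B_q\big)$ is controllable with controllability index $m$.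
   Context: The neighbor graph has an arc $j\to i$ iff $j$ is a neighbor of $i$. Strongly connected: directed paths exist between every ordered pair of vertices. The controllability index of a controllable pair $(F,G)$ is the smallest $k$ with $\mathrm{rank}[G\ FG\ \cdots\ F^{k-1}G]$ equal to the state dimension. *)

(* Defs.v *)
From HB Require Import structures.
From mathcomp Require Import all_boot all_order all_algebra.
From mathcomp Require Import reals.
Set Implicit Arguments. Unset Strict Implicit. Unset Printing Implicit Defensive.
Import Order.TTheory GRing.Theory Num.Theory.
Local Open Scope ring_scope.

Section Defs.
Variable R : nzRingType.

(* Kronecker product A (x) B, with the standard row-major index
   (i, j) |-> i * r + j given by mxvec_index. *)
Definition kron p q r s (A : 'M[R]_(p, q)) (B : 'M[R]_(r, s)) : 'M[R]_(p * r, q * s) :=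
  \matrix_(a, b)
    let (i, j) := enum_val (cast_ord (esym (mxvec_cast p r)) a) in
    let (k, l) := enum_val (cast_ord (esym (mxvec_cast q s)) b) in
    A i k * B j l.

Definition colstack k n N (X : 'I_k -> 'M[R]_(n, N)) : 'M[R]_(k * n, N) :=
  \matrix_(a, b)
    let (i, j) := enum_val (cast_ord (esym (mxvec_cast k n)) a) in X i j b.

Definition ctrb_mx N p (F : 'M[R]_N) (G : 'M[R]_(N, p)) (k : nat) :=
  \mxrow_(j < k) (F ^+ j *m G).
End Defs.

Section Ctrb.
Variable R : fieldType.
Definition ctrb_full N p (F : 'M[R]_N) (G : 'M[R]_(N, p)) (k : nat) : bool :=
  \rank (ctrb_mx F G k) == N.
Definition controllable N p (F : 'M[R]_N) (G : 'M[R]_(N, p)) : Prop :=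
  exists k, ctrb_full F G k.
Definition ctrb_index_eq N p (F : 'M[R]_N) (G : 'M[R]_(N, p)) (k : nat) : Prop :=
  controllable F G /\ ctrb_full F G k /\ (forall k', (k' < k)%N -> ~~ ctrb_full F G k').
End Ctrb.

Section Graph.
Variable m : nat.
(* neighbor set of i (including i); arc j -> i iff e j i, i.e. j is a neighbor of i *)
Definition nbrs (e : rel 'I_m) (i : 'I_m) : {set 'I_m} := [set j | (j == i) || e j i].
Definition strongly_connected (e : rel 'I_m) : Prop := forall i j : 'I_m, connect e i j.
End Graph.

Section Mats.
Variables (R : nzRingType) (m n : nat).
Definition Btil (i : 'I_m) : 'M[R]_(m * n, n) :=
  castmx (erefl, mul1n n) (kron (delta_mx i (0 : 'I_1)) (1%:M : 'M[R]_n)).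
Definition Cij (i j : 'I_m) : 'M[R]_(n, m * n) :=
  castmx (mul1n n, erefl)
    (kron (delta_mx (0 : 'I_1) i - delta_mx (0 : 'I_1) j) (1%:M : 'M[R]_n)).
(* C~_i = column{C_{i j_1}, ..., C_{i j_{m_i}}} with j_1 < ... < j_{m_i} the neighbors of i *)
Definition Ctil (e : rel 'I_m) (i : 'I_m) : 'M[R]_(#|nbrs e i| * n, m * n) :=
  colstack (fun k : 'I_#|nbrs e i| => Cij i (enum_val k)).
End Mats.

(* Main.v *)
Require Import Defs.
From HB Require Import structures.
From mathcomp Require Import all_boot all_order all_algebra.
From mathcomp Require Import reals.
From mathcomp Require Import zify.
Set Implicit Arguments. Unset Strict Implicit. Unset Printing Implicit Defensive.
Import Order.TTheory GRing.Theory Num.Theory.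
Local Open Scope ring_scope.


Lemma enum_I1X n : enum {: 'I_1 * 'I_n} = [seq (ord0, x) | x <- enum 'I_n].
Proof.
rewrite enumT unlock /= /prod_enum.
have -> : enum 'I_1 = [:: ord0].
  by apply: (inj_map val_inj); rewrite val_enum_ord.
by rewrite /= cats0.
Qed.

Lemma val_mxvec_index1 n (c : 'I_n) : val (mxvec_index (0 : 'I_1) c) = val c.
Proof.
rewrite /mxvec_index /=.
have -> : (0 : 'I_1) = @ord0 0 by [].
have h := nth_enum_rank (@ord0 0, c) (@ord0 0, c).
rewrite enum_I1X in h.
have hs : (enum_rank (@ord0 0, c) < size (enum 'I_n))%N.
  by rewrite size_enum_ord; apply: (leq_trans (ltn_ord _)); rewrite card_prod !card_ord mul1n.
rewrite (nth_map c) // in h.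
case: h => h.
have := index_enum_ord c. rewrite -{1}h index_uniq ?enum_uniq //.
Qed.

Lemma cast1n n (c : 'I_n) : cast_ord (esym (mul1n n)) c = mxvec_index (0 : 'I_1) c.
Proof. by apply: val_inj; rewrite val_mxvec_index1. Qed.

Lemma enum_mxvec (a b : nat) i j :
  enum_val (cast_ord (esym (mxvec_cast a b)) (mxvec_index i j)) = (i, j).
Proof. by rewrite /mxvec_index cast_ordK enum_rankK. Qed.

Lemma mxvec_index_inj (a b : nat) i j i' j' :
  (@mxvec_index a b i j == mxvec_index i' j') = (i == i') && (j == j').
Proof.
rewrite /mxvec_index (inj_eq (@cast_ord_inj _ _ _)) (inj_eq (@enum_rank_inj _)).
by rewrite xpair_eqE.
Qed.

Lemma sum_mxvec (R : nmodType) (a b : nat) (F : 'I_(a * b) -> R) :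
  \sum_(x < a * b) F x = \sum_(i < a) \sum_(j < b) F (mxvec_index i j).
Proof.
rewrite pair_bigA /=.
rewrite (reindex (uncurry (@mxvec_index a b))) /=; last first.
  by apply: onW_bij; case: (curry_mxvec_bij a b) => g h1 h2; exists g => x; [apply: h1|apply: h2].
by apply: eq_bigr => [[i j]].
Qed.

Section Delta.
Variable R : pzSemiRingType.
Lemma sum_delta_l n (r : 'I_n) (F : 'I_n -> R) : \sum_c (r == c)%:R * F c = F r.
Proof.
rewrite (bigD1 r) //= eqxx mul1r big1 ?addr0 // => c /negPf.
by rewrite eq_sym => ->; rewrite mul0r.
Qed.
Lemma sum_delta_r n (r : 'I_n) (F : 'I_n -> R) : \sum_c F c * (c == r)%:R = F r.
Proof.
rewrite (bigD1 r) //= eqxx mulr1 big1 ?addr0 // => c /negPf -> ; by rewrite mulr0.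
Qed.
End Delta.

Section Entries.
Variables (R : comNzRingType) (m n : nat).

Lemma BtilE (i i0 : 'I_m) (r c : 'I_n) :
  @Btil R m n i (mxvec_index i0 r) c = (i0 == i)%:R * (r == c)%:R.
Proof.
rewrite /Btil castmxE /= cast_ord_id cast1n /kron mxE !enum_mxvec !mxE.
by rewrite eqxx andbT.
Qed.

Lemma CijE (i j j0 : 'I_m) (r s : 'I_n) :
  @Cij R m n i j r (mxvec_index j0 s) = ((j0 == i)%:R - (j0 == j)%:R) * (r == s)%:R.
Proof.
rewrite /Cij castmxE /= cast_ord_id cast1n /kron mxE !enum_mxvec !mxE.
by rewrite !eqxx.
Qed.

Lemma CtilE (e : rel 'I_m) i k s b :
  @Ctil R m n e i (mxvec_index k s) b = @Cij R m n i (enum_val k) s b.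
Proof. by rewrite /Ctil /colstack mxE enum_mxvec. Qed.
End Entries.


Section Lift.
Variables (R : fieldType) (m n : nat) (e : rel 'I_m).

Definition Hof (L : 'M[R]_m) (i : 'I_m) : 'M[R]_(n, #|nbrs e i| * n) :=
  \matrix_(r, b) let (k, s) := enum_val (cast_ord (esym (mxvec_cast #|nbrs e i| n)) b) in
     - L i (enum_val k) * (r == s)%:R.

Lemma HofE L i r k s : Hof L i r (mxvec_index k s) = - L i (enum_val k) * (r == s)%:R.
Proof. by rewrite mxE enum_mxvec. Qed.

Variable L : 'M[R]_m.
Hypothesis hsupp : forall i j, j \notin nbrs e i -> L i j = 0.
Hypothesis hrow : forall i, \sum_j L i j = 0.

Definition Abig := \sum_(i < m) @Btil R m n i *m Hof L i *m @Ctil R m n e i.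

Lemma AbigE i0 r j0 s :
  Abig (mxvec_index i0 r) (mxvec_index j0 s) = L i0 j0 * (r == s)%:R.
Proof.
rewrite /Abig summxE.
have hBH i b : (@Btil R m n i *m Hof L i) (mxvec_index i0 r) b = (i0 == i)%:R * Hof L i r b.
  rewrite mxE (eq_bigr (fun c => (i0 == i)%:R * ((r == c)%:R * Hof L i c b))); last first.
    by move=> c _; rewrite BtilE mulrA.
  by rewrite -big_distrr /= sum_delta_l.
have h1 i : (@Btil R m n i *m Hof L i *m @Ctil R m n e i) (mxvec_index i0 r) (mxvec_index j0 s)
   = (i0 == i)%:R * (\sum_(x in nbrs e i) (- L i x * ((j0 == i)%:R - (j0 == x)%:R))) * (r == s)%:R.
  rewrite mxE sum_mxvec.
  rewrite (big_enum_val (fun x => - L i x * ((j0 == i)%:R - (j0 == x)%:R))) /=.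
  rewrite big_distrr big_distrl /=; apply: eq_bigr => k _.
  rewrite (bigD1 r) //= big1 ?addr0; last first.
    by move=> s' ns; rewrite hBH HofE CtilE CijE [r == _]eq_sym (negPf ns) !(mulr0, mul0r).
  by rewrite hBH HofE CtilE CijE eqxx mulr1 !mulrA.
rewrite (eq_bigr _ (fun i _ => h1 i)).
rewrite (eq_bigr (fun i => (i0 == i)%:R * ((\sum_(x in nbrs e i) (- L i x * ((j0 == i)%:R - (j0 == x)%:R))) * (r == s)%:R))); last by move=> i _; rewrite mulrA.
rewrite sum_delta_l; congr (_ * _).
rewrite (big_mkcond (fun x => x \in nbrs e i0)) /=.
rewrite (eq_bigr (fun x => L i0 x * (j0 == x)%:R - (j0 == i0)%:R * L i0 x)); last first.
  move=> x _; case: ifP => hx; last by rewrite hsupp ?hx // mul0r mulr0 subrr.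
  by rewrite mulNr mulrBr opprB [_ * L i0 x]mulrC.
rewrite sumrB -big_distrr /= hrow mulr0 subr0.
rewrite (eq_bigr (fun x => L i0 x * (x == j0)%:R)) ?sum_delta_r // => x _.
by rewrite eq_sym.
Qed.


Variable q : 'I_m.
Lemma AbigXE k i r c :
  (Abig ^+ k *m @Btil R m n q) (mxvec_index i r) c = (L ^+ k) i q * (r == c)%:R.
Proof.
elim: k i r c => [|k IH] i r c.
  by rewrite !expr0 mul1mx BtilE mxE.
rewrite exprS -mulmxE -mulmxA mxE sum_mxvec.
rewrite exprS -mulmxE mxE big_distrl /=; apply: eq_bigr => j _.
rewrite (bigD1 r) //= big1 ?addr0; last first.
  by move=> s ns; rewrite AbigE IH [r == _]eq_sym (negPf ns) !(mulr0, mul0r).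
by rewrite AbigE IH eqxx mulr1 mulrA.
Qed.

Definition Kry (M : 'M[R]_m) (q : 'I_m) : 'M[R]_m := \matrix_(i, j) (M ^+ j) i q.

Hypothesis hK : \det (Kry L q) != 0.
Hypothesis n_gt0 : (0 < n)%N.

Lemma ctrb_ok : ctrb_index_eq Abig (@Btil R m n q) m.
Proof.
have full : ctrb_full Abig (@Btil R m n q) m.
  rewrite /ctrb_full /ctrb_mx.
  have Ku : Kry L q \in unitmx by rewrite unitmxE unitfE.
  pose Ki := invmx (Kry L q).
  pose Y (j : 'I_m) : 'M[R]_(n, m * n) := \matrix_(c, b)
     let (i', r') := enum_val (cast_ord (esym (mxvec_cast m n)) b) in Ki j i' * (c == r')%:R.
  have YE j c i' r' : Y j c (mxvec_index i' r') = Ki j i' * (c == r')%:R.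
    by rewrite mxE enum_mxvec.
  have hX : \mxrow_(j < m) (Abig ^+ j *m @Btil R m n q) *m \mxcol_(j < m) Y j = 1%:M.
    rewrite mul_mxrow_mxcol; apply/matrixP => a b.
    case/mxvec_indexP: a => i r; case/mxvec_indexP: b => i' r'.
    rewrite summxE mxE mxvec_index_inj.
    have -> : ((i == i') && (r == r'))%:R = (Kry L q *m Ki) i i' * (r == r')%:R :> R.
      by rewrite mulmxV // mxE; case: (i == i'); case: (r == r'); rewrite ?mulr1 ?mulr0.
    rewrite mxE big_distrl /=; apply: eq_bigr => j _.
    rewrite mxE (bigD1 r) //= big1 ?addr0; last first.
      by move=> s ns; rewrite AbigXE YE [r == _]eq_sym (negPf ns) !(mulr0, mul0r).
    by rewrite AbigXE YE eqxx mulr1 mxE mulrA.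
  apply/eqP/anti_leq; rewrite rank_leq_row /=.
  by rewrite -{1}(mxrank1 R (m * n)) -hX mxrankM_maxl.
split; first by exists m.
split=> // k' hk; rewrite /ctrb_full neq_ltn; apply/orP; left.
apply: (leq_ltn_trans (rank_leq_col _)).
by rewrite big_const_ord iter_addn_0 mulnC ltn_pmul2r.
Qed.
End Lift.


Section Tree.
Variables (m : nat) (e : rel 'I_m) (q : 'I_m).
Hypothesis sc : forall s, connect e q s.

Fixpoint reach (k : nat) (s : 'I_m) : bool :=
  if k is k'.+1 then reach k' s || [exists p, reach k' p && e p s] else s == q.

Lemma reach_path p x k : reach k x -> path e x p -> reach (k + size p) (last x p).
Proof.
elim: p x k => [|y p IH] x k /= hx; first by rewrite addn0.
case/andP=> exy hp; rewrite addnS -addSn; apply: IH => //=.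
by apply/orP; right; apply/existsP; exists x; rewrite hx.
Qed.

Lemma reach_ex s : exists k, reach k s.
Proof.
case/connectP: (sc s) => p hp ->; exists (0 + size p)%N; apply: reach_path => //=.
Qed.

Definition dd s := ex_minn (reach_ex s).

Lemma par_ex s : s != q -> exists p, e p s && (dd p < dd s)%N.
Proof.
move=> sq; rewrite /dd; case: ex_minnP => k hk kmin.
case: k hk kmin => [|k] /=; first by rewrite (negPf sq).
move=> hk kmin; case/orP: hk => [hk|].
  by have := kmin _ hk; rewrite ltnn.
case/existsP=> p /andP[hp ep]; exists p; rewrite ep /=.
case: ex_minnP => k' _ /(_ _ hp); rewrite ltnS; done.
Qed.

Definition par s := odflt q [pick p | e p s && (dd p < dd s)%N].

Lemma par_spec s : s != q -> e (par s) s && (dd (par s) < dd s)%N.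
Proof.
move=> sq; rewrite /par; case: pickP => [p -> //|hn].
by case: (par_ex sq) => p; rewrite hn.
Qed.

Definition rho s := (dd s * m + s)%N.

Lemma rho_inj : injective rho.
Proof.
move=> s t h; apply: val_inj.
have := congr1 (modn^~ m) h; rewrite /rho !modnMDl !modn_small //.
Qed.

Lemma rho_par s : s != q -> (rho (par s) < rho s)%N.
Proof.
move/par_spec=> /andP[_ h]; rewrite /rho.
have h1 := ltn_ord (par s); have h2 : ((dd (par s)).+1 <= dd s)%N by [].
nia.
Qed.
End Tree.


Section PerQ.
Variables (R : realFieldType) (m : nat) (e : rel 'I_m) (q : 'I_m).
Hypothesis sc : forall s, connect e q s.

Local Notation rho := (rho sc).
Local Notation par := (par sc).

Definition w (s : 'I_m) : R := if s == q then 0 else ((rho s).+1%:R)^-1.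

Definition Lq : 'M[R]_m := \matrix_(i, j) (w i * ((j == i)%:R - (par i == j)%:R)).

Lemma w_ge0 s : 0 <= w s.
Proof. by rewrite /w; case: ifP => // _; rewrite invr_ge0 ler0n. Qed.

Lemma w_gt0 s : s != q -> 0 < w s.
Proof. by rewrite /w => /negPf ->; rewrite invr_gt0 ltr0Sn. Qed.

Lemma w_lt s t : s != q -> t != q -> (rho s < rho t)%N -> w t < w s.
Proof.
rewrite /w => /negPf -> /negPf -> h.
by rewrite ltf_pV2 ?posrE ?ltr0Sn // ltr_nat ltnS.
Qed.

Lemma Lq_supp i j : j \notin nbrs e i -> Lq i j = 0.
Proof.
rewrite inE negb_or => /andP[ji nej]; rewrite mxE (negPf ji) sub0r.
case: (eqVneq i q) => [->|iq]; first by rewrite /w eqxx mul0r.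
case: eqP => [pj|_]; last by rewrite oppr0 mulr0.
by have := par_spec sc iq; rewrite pj (negPf nej).
Qed.

Lemma Lq_row i : \sum_j Lq i j = 0.
Proof.
under eq_bigr do rewrite mxE.
rewrite -big_distrr /= sumrB (eq_bigr (fun j => (i == j)%:R)); last by move=> j _; rewrite eq_sym.
have d1 r : \sum_(j < m) (r == j)%:R = 1 :> R.
  by rewrite (eq_bigr (fun j => (r == j)%:R * 1)) ?sum_delta_l // => j _; rewrite mulr1.
by rewrite !d1 subrr mulr0.
Qed.

Lemma mulLqE (y : 'rV[R]_m) s :
  (y *m Lq) 0 s = y 0 s * w s - \sum_i (par i == s)%:R * (y 0 i * w i).
Proof.
rewrite mxE; under eq_bigr do rewrite mxE.
rewrite (eq_bigr (fun i => (y 0 i * w i) * (i == s)%:R - (par i == s)%:R * (y 0 i * w i))); last first.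
  by move=> i _; rewrite mulrA mulrBr [s == i]eq_sym [_ * (par i == s)%:R]mulrC.
by rewrite sumrB sum_delta_r.
Qed.

Definition Tsum (y : 'rV[R]_m) s := \sum_i (par i == s)%:R * (y 0 i * w i).

Lemma eigen_pos (y : 'rV[R]_m) v : 0 < y 0 v -> (forall s, (rho v < rho s)%N -> y 0 s = 0) ->
  y *m Lq = w v *: y -> y 0 q = 0 -> False.
Proof.
move=> yv top eig yq.
have vq : v != q by apply: contraTneq yv => ->; rewrite yq ltxx.
have hT s : Tsum y s = (w s - w v) * y 0 s.
  have h : (y *m Lq) 0 s = (w v *: y) 0 s by rewrite eig.
  rewrite mulLqE mxE in h.
  by rewrite /Tsum mulrBl -h [w s * _]mulrC opprB addrC subrK.
pose B := (\max_(s : 'I_m) rho s).+1.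
have rB s : (rho s < B)%N by rewrite ltnS; apply: (leq_bigmax_cond s).
have A : forall s, s != q -> 0 <= y 0 s.
  suff H : forall k s, (B <= rho s + k)%N -> s != q -> 0 <= y 0 s.
    by move=> s; apply: (H B); rewrite leq_addl.
  elim=> [|k IH] s hs sq; first by have := rB s; rewrite ltnNge -(addn0 (rho s)) hs.
  case: (ltngtP (rho v) (rho s)) => [vs|sv|/rho_inj <-]; last exact: ltW.
    by rewrite top.
  have : 0 <= Tsum y s.
    apply: sumr_ge0 => i _; case: eqP => [pis|]; last by rewrite mul0r.
    case: (eqVneq i q) => [->|iq]; first by rewrite /w eqxx !mulr0.
    have := rho_par sc iq; rewrite pis => h.
    rewrite mul1r mulr_ge0 ?w_ge0 //; apply: IH iq.
    by apply: leq_trans hs _; rewrite addnS -addSn leq_add2r.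
  by rewrite hT pmulr_rge0 // subr_gt0 w_lt.
have Tge i s : 0 <= (par i == s)%:R * (y 0 i * w i).
  case: (eqVneq i q) => [->|iq]; first by rewrite /w eqxx !mulr0.
  by rewrite mulr_ge0 ?ler0n // mulr_ge0 ?w_ge0 ?A.
suff H : forall k s, (rho s < k)%N -> s != q -> 0 < y 0 s -> False.
  exact: (H (rho v).+1 v).
elim=> [|k IH] s // hs sq ys.
set p := par s.
have ps : (rho p < rho s)%N by apply: rho_par.
have Tp : 0 < Tsum y p.
  rewrite /Tsum (bigD1 s) //= eqxx mul1r.
  apply: (@lt_le_trans _ _ (y 0 s * w s)); first by rewrite mulr_gt0 ?w_gt0.
  by rewrite lerDl sumr_ge0.
have yp : y 0 p != 0.
  by apply: contraTneq Tp => h; rewrite hT h mulr0 ltxx.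
case: (eqVneq p q) => [pq|pq]; first by rewrite pq yq eqxx in yp.
apply: (IH p) => //; first by apply: leq_trans ps _; rewrite -ltnS.
by rewrite lt_def yp A.
Qed.

Lemma eigen_ne0 (y : 'rV[R]_m) v : y 0 v != 0 -> (forall s, (rho v < rho s)%N -> y 0 s = 0) ->
  y *m Lq = w v *: y -> y 0 q = 0 -> False.
Proof.
move=> yv top eig yq.
case: (ltgtP 0 (y 0 v)) => [h|h|h]; last by rewrite h eqxx in yv.
  exact: (eigen_pos h).
apply: (@eigen_pos (- y) v); first by rewrite mxE oppr_gt0.
- by move=> s h'; rewrite mxE top ?oppr0.
- by rewrite mulNmx eig scalerN.
- by rewrite mxE yq oppr0.
Qed.

Lemma top_ex (y : 'rV[R]_m) : y != 0 ->
  exists v, (y 0 v != 0) && [forall s, (y 0 s != 0) ==> (rho s <= rho v)%N].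
Proof.
move=> y0.
have [s0 hs0] : exists s0, y 0 s0 != 0.
  apply/existsP; apply: contraNT y0 => /existsPn h; apply/eqP/rowP => s.
  by rewrite mxE; apply/eqP; rewrite -[_ == _]negbK h.
case: (@arg_maxnP _ s0 (fun s => y 0 s != 0) rho hs0) => v hv hmax.
by exists v; rewrite hv; apply/forallP => s; apply/implyP; apply: hmax.
Qed.

Lemma main_ind k : forall (y : 'rV[R]_m) v, y 0 v != 0 ->
  (forall s, (rho v < rho s)%N -> y 0 s = 0) ->
  (#|[set s | (rho s <= rho v)%N]| <= k)%N ->
  (forall j, (j < k)%N -> (y *m Lq ^+ j) 0 q = 0) -> False.
Proof.
elim: k => [|k IH] y v yv top hc hU.
  by move: hc; rewrite leqn0 => /eqP/cards0_eq/setP/(_ v); rewrite !inE leqnn.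
set y' := y *m Lq - w v *: y.
have yq : y 0 q = 0 by have := hU 0%N isT; rewrite expr0 mulmx1.
have E : forall (A B : 'rV[R]_m) s, (A - w v *: B) 0 s = A 0 s - w v * B 0 s.
  by move=> A B s'; rewrite !mxE.
have y'0 : forall s, (rho v <= rho s)%N -> y' 0 s = 0.
  move=> s hs; rewrite /y' E mulLqE.
  rewrite big1; last first.
    move=> i _; case: eqP => [pis|]; last by rewrite mul0r.
    case: (eqVneq i q) => [->|iq]; first by rewrite /w eqxx !mulr0.
    have := rho_par sc iq; rewrite pis => h.
    by rewrite top ?mul0r ?mulr0 //; exact: leq_ltn_trans hs h.
  rewrite subr0; case: (eqVneq s v) => [->|sv]; first by rewrite mulrC subrr.
  rewrite top ?mul0r ?mulr0 ?subrr //.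
  by rewrite ltn_neqAle hs andbT; apply: contra sv => /eqP/rho_inj ->.
case: (eqVneq y' 0) => [y'z|y'nz].
  apply: (eigen_ne0 yv top) => //.
  by apply/eqP; rewrite -subr_eq0 -/y' y'z.
case: (top_ex y'nz) => v' /andP[yv' /forallP hmax].
have vv : (rho v' < rho v)%N.
  by rewrite ltnNge; apply: contra yv' => h; rewrite y'0.
apply: (IH y' v') => //.
- move=> s hs; apply/eqP; rewrite -[_ == _]negbK; apply/negP => hn.
  by have := implyP (hmax s) hn; rewrite leqNgt hs.
- rewrite -ltnS; apply: leq_trans hc.
  apply: (@leq_ltn_trans #|[set s | (rho s <= rho v)%N] :\ v|).
    apply: subset_leq_card; apply/subsetP => s; rewrite !inE => h.
    rewrite (leq_trans h (ltnW vv)) andbT.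
    by apply: contraTneq h => ->; rewrite -ltnNge.
  by rewrite [X in (_ < X)%N](cardsD1 v) inE leqnn.
- move=> j hj; rewrite /y' mulmxBl -scalemxAl E.
  rewrite -mulmxA mulmxE -exprS !hU ?mulr0 ?subr0 //.
  by rewrite ltnS ltnW.
Qed.

Lemma Lq_det : \det (Kry Lq q) != 0.
Proof.
apply/negP => /det0P [y y0 hy].
case: (top_ex y0) => v /andP[yv /forallP hmax].
apply: (@main_ind m y v yv).
- move=> s hs; apply/eqP; rewrite -[_ == _]negbK; apply/negP => hn.
  by have := implyP (hmax s) hn; rewrite leqNgt hs.
- by apply: leq_trans (max_card _) _; rewrite card_ord.
- move=> j hj.
  have h := congr1 (fun M : 'rV_m => M 0 (Ordinal hj)) hy; rewrite /= !mxE in h.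
  rewrite mxE -[RHS]h; apply: eq_bigr => i _; by rewrite mxE.
Qed.
End PerQ.


Section Comb.
Variables (R : realFieldType) (m : nat).

Lemma poly_nonroot (p : {poly R}) : p != 0 -> exists x, p.[x] != 0.
Proof.
move=> p0.
case: (boolP (all (root p) [seq i%:R | i <- iota 0 (size p)])) => hall; last first.
  by case/allPn: hall => x _ hx; exists x.
have := @max_poly_roots _ p [seq i%:R | i <- iota 0 (size p)] p0 hall.
rewrite size_map size_iota ltnn => h; suff : false by []; apply: h.
by rewrite map_inj_uniq ?iota_uniq // => a b /eqP; rewrite eqr_nat => /eqP.
Qed.

Definition lag (p : 'I_m) : {poly R} :=
  \prod_(p' < m | p' != p) (('X - (val p')%:R%:P) * (((val p)%:R - (val p')%:R)^-1)%:P).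

Lemma lagE p q : (lag p).[(val q)%:R] = (p == q)%:R.
Proof.
rewrite /lag horner_prod.
under eq_bigr do rewrite hornerM hornerXsubC hornerC.
case: (eqVneq p q) => [<-|pq].
  rewrite big1 // => p' hp; rewrite mulfV // subr_eq0 eqr_nat.
  by apply: contra hp => /eqP h; apply/eqP/val_inj.
by rewrite (bigD1 q) 1?eq_sym //= subrr mul0r mul0r.
Qed.

Variable Lp : 'I_m -> 'M[R]_m.

Definition Px : 'M[{poly R}]_m := \matrix_(i, j) \sum_p lag p * (Lp p i j)%:P.
Definition Lx (x : R) : 'M[R]_m := \matrix_(i, j) \sum_p (lag p).[x] * Lp p i j.

Lemma map_Px x : map_mx (horner_eval x) Px = Lx x.
Proof.
apply/matrixP => i j; rewrite !mxE /= horner_evalE horner_sum; apply: eq_bigr => p _.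
by rewrite hornerM hornerC.
Qed.

Lemma map_mxX' (f : {rmorphism {poly R} -> R}) (A : 'M[{poly R}]_m) k :
  map_mx f (A ^+ k) = (map_mx f A) ^+ k.
Proof.
elim: k => [|k IH]; first by rewrite !expr0 map_mx1.
by rewrite !exprS -!mulmxE map_mxM IH.
Qed.

Definition Dq (q : 'I_m) : {poly R} := \det (\matrix_(i, j) (Px ^+ j) i q).

Lemma DqE q x : (Dq q).[x] = \det (Kry (Lx x) q).
Proof.
rewrite /Dq -horner_evalE -det_map_mx /Kry; congr (\det _).
apply/matrixP => i j; rewrite !mxE.
by rewrite -map_Px -map_mxX' mxE.
Qed.

Lemma LxE q : Lx (val q)%:R = Lp q.
Proof.
apply/matrixP => i j; rewrite mxE (bigD1 q) //= lagE eqxx mul1r big1 ?addr0 //.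
by move=> p /negPf hp; rewrite lagE hp mul0r.
Qed.

Hypothesis hK : forall q, \det (Kry (Lp q) q) != 0.

Lemma comb_ex : exists x, forall q, \det (Kry (Lx x) q) != 0.
Proof.
have hD : \prod_q Dq q != 0.
  rewrite prodf_seq_neq0; apply/allP => q _ /=.
  by apply: contraNneq (hK q) => h; rewrite -LxE -DqE h horner0.
case: (poly_nonroot hD) => x hx; exists x => q.
rewrite -DqE; move: hx; rewrite horner_prod (bigD1 q) //= mulf_eq0 negb_or.
by case/andP.
Qed.
End Comb.

Theorem lemma3 (R : realType) (m n : nat) (e : rel 'I_m) :
  (0 < m)%N -> (0 < n)%N -> strongly_connected e ->
  exists H : forall i : 'I_m, 'M[R]_(n, #|nbrs e i| * n),
    forall q : 'I_m,
      ctrb_index_eq (\sum_(i < m) @Btil R m n i *m H i *m @Ctil R m n e i) (@Btil R m n q) m.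
Proof.
move=> m0 n0 sc.
have hq : forall q s, connect e q s by move=> q s; exact: sc.
pose Lp (q : 'I_m) : 'M[R]_m := @Lq R m e q (hq q).
have hK : forall q, \det (Kry (Lp q) q) != 0 by move=> q; exact: Lq_det.
case: (comb_ex hK) => x hx.
set L := Lx Lp x in hx.
have hsupp : forall i j, j \notin nbrs e i -> L i j = 0.
  move=> i j hj; rewrite /L mxE big1 // => p _.
  by rewrite /Lp Lq_supp ?mulr0.
have hrow : forall i, \sum_j L i j = 0.
  move=> i; under eq_bigr do rewrite /L mxE.
  rewrite exchange_big big1 // => p _.
  by rewrite -big_distrr /= /Lp Lq_row mulr0.
exists (@Hof R m n e L) => q.
exact: (@ctrb_ok R m n e L hsupp hrow q (hx q) n0).
Qed.
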